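(* Let $(S,\mathcal{S})$ be a measurable space with $\Delta\in\mathcal{S}\otimes\mathcal{S}$ and let $\pi$ be a constructive cr-set. Then there exists $F\in\mathcal{S}$ such that (i) $\pi\cap F$ possesses a version that is $\sigma$-finite on $\mathcal{S}$, and (ii) for all $A\in\mathcal{S}$, either $P((\pi\cap F^{c})\cap A\neq \emptyset)=0$ or $P(|(\pi\cap F^{c})\cap A|=\infty)>0$. Moreover, if two sets $F_{1},F_{2}\in\mathcal{S}$ both satisfy (i) and (ii), then $P(\pi\cap (F_{1}\triangle F_{2})\neq \emptyset)=0$.
   Context: $\Delta=\{(x,x)\mid x\in S\}$. $(\Omega,\mathcal{F},P)$ is a probability space; $C(S)$ is the set of countable subsets of $S$; $N_A(M)=|A\cap M|$; $\mathcal{C}(\mathcal{S})=\sigma(N_A\mid A\in\mathcal{S})$; a cr-set is an $\mathcal{F}$-$\mathcal{C}(\mathcal{S})$ measurable map $\Omega\to C(S)$, finite if its values are finite sets. A map $\tau:\Omega\to C(S)$ is constructive if $\tau(\omega)=\bigcup_k\pi_k(\omega)$ for all $\omega$ for some finite cr-sets $\pi_k$, $k\in\mathbb{N}$. For $A\in\mathcal{S}$, $\pi\cap A$ denotes the cr-set $\omega\mapsto\pi(\omega)\cap A$. A version of a cr-set $\pi$ is a cr-set $\pi'$ with $\pi'(\omega)=\pi(\omega)$ for all $\omega$ outside a $P$-null set in $\mathcal{F}$. A map $\tau$ is $\sigma$-finite on $\mathcal{S}$ if there are $A_n\in\mathcal{S}$ with $S=\bigcup_nA_n$ and $|\tau(\omega)\cap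 A_n|<\infty$ for all $\omega$ and $n$. *)

(* Defs.v *)
From Stdlib Require Import Reals List.
Open Scope R_scope.

Definition set (T : Type) := T -> Prop.

Definition sigma_algebra {T : Type} (Sg : set (set T)) : Prop :=
  Sg (fun _ => True) /\
  (forall A, Sg A -> Sg (fun x => ~ A x)) /\
  (forall A : nat -> set T, (forall n, Sg (A n)) -> Sg (fun x => exists n, A n x)).

Definition gen_sigma {T : Type} (G : set (set T)) : set (set T) :=
  fun X => forall H : set (set T), sigma_algebra H -> (forall Y, G Y -> H Y) -> H X.

Definition prod_sigma {T : Type} (Sg : set (set T)) : set (set (T * T)) :=
  gen_sigma (fun X => exists A B, Sg A /\ Sg B /\
                         forall p : T * T, X p <-> (A (fst p) /\ B (snd p))).

Definition diagonal (T : Type) : set (T * T) := fun p => fst p = snd p.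

(** Probability measure P on (Omega, F): nonnegative, total mass 1,
    countably additive on F (P is given as a function on all subsets,
    only its values on F matter). *)
Definition probability {Omega : Type} (F : set (set Omega)) (P : set Omega -> R) : Prop :=
  sigma_algebra F /\
  (forall A, F A -> 0 <= P A) /\
  P (fun _ => True) = 1 /\
  (forall A : nat -> set Omega, (forall n, F (A n)) ->
     (forall m n x, m <> n -> A m x -> A n x -> False) ->
     infinite_sum (fun n => P (A n)) (P (fun w => exists n, A n w))).

(** Cardinality in N u {oo}:  card_is X (Some n) iff |X| = n,
    card_is X None iff X is infinite. *)
Definition card_is {T : Type} (X : set T) (k : option nat) : Prop :=
  match k with
  | Some n => exists l : list T, length l = n /\ NoDup l /\ forall x, X x <-> In x l
  | None => forall l : list T, exists x, X x /\ ~ In x l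
  end.

Definition finite_set {T : Type} (X : set T) : Prop := exists n, card_is X (Some n).

Definition countable_set {T : Type} (X : set T) : Prop :=
  exists f : nat -> option T, forall x, X x -> exists n, f n = Some x.

Definition setI {T : Type} (X Y : set T) : set T := fun x => X x /\ Y x.

Definition N_ {T : Type} (A : set T) (M : set T) (k : option nat) : Prop :=
  card_is (setI A M) k.

(** C(S) = sigma(N_A | A in S) on the countable subsets of T
    (we let it act on all subsets; cr-sets only take countable values),
    with N_A valued in N u {oo} carrying the discrete sigma-algebra. *)
Definition CS {T : Type} (Sg : set (set T)) : set (set (set T)) :=
  gen_sigma (fun X => exists (A : set T) (B : set (option nat)), Sg A /\
                 forall M, X M <-> exists k, N_ A M k /\ B k).

Definition cr_set {Omega T : Type} (F : set (set Omega)) (Sg : set (set T))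
    (pi : Omega -> set T) : Prop :=
  (forall w, countable_set (pi w)) /\
  (forall X, CS Sg X -> F (fun w => X (pi w))).

Definition finite_cr_set {Omega T : Type} (F : set (set Omega)) (Sg : set (set T))
    (pi : Omega -> set T) : Prop :=
  cr_set F Sg pi /\ forall w, finite_set (pi w).

Definition constructive {Omega T : Type} (F : set (set Omega)) (Sg : set (set T))
    (pi : Omega -> set T) : Prop :=
  exists pik : nat -> Omega -> set T,
    (forall k, finite_cr_set F Sg (pik k)) /\
    forall w x, pi w x <-> exists k, pik k w x.

Definition cr_inter {Omega T : Type} (pi : Omega -> set T) (A : set T) : Omega -> set T :=
  fun w => setI (pi w) A.

Definition version {Omega T : Type} (F : set (set Omega)) (P : set Omega -> R)
    (Sg : set (set T)) (pi pi' : Omega -> set T) : Prop :=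
  cr_set F Sg pi' /\
  exists N : set Omega, F N /\ P N = 0 /\
    forall w, ~ N w -> forall x, pi' w x <-> pi w x.

Definition sigma_finite_on {Omega T : Type} (Sg : set (set T)) (tau : Omega -> set T) : Prop :=
  exists An : nat -> set T,
    (forall n, Sg (An n)) /\ (forall x, exists n, An n x) /\
    forall w n, finite_set (setI (tau w) (An n)).

Definition setC {T : Type} (X : set T) : set T := fun x => ~ X x.
Definition symdiff {T : Type} (X Y : set T) : set T :=
  fun x => (X x /\ ~ Y x) \/ (Y x /\ ~ X x).

Definition prop_i {Omega T : Type} (F : set (set Omega)) (P : set Omega -> R)
    (Sg : set (set T)) (pi : Omega -> set T) (F0 : set T) : Prop :=
  exists pi', version F P Sg (cr_inter pi F0) pi' /\ sigma_finite_on Sg pi'.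

Definition prop_ii {Omega T : Type} (P : set Omega -> R)
    (Sg : set (set T)) (pi : Omega -> set T) (F0 : set T) : Prop :=
  forall A, Sg A ->
    P (fun w => exists x, cr_inter (cr_inter pi (setC F0)) A w x) = 0 \/
    P (fun w => card_is (cr_inter (cr_inter pi (setC F0)) A w) None) > 0.

(* Main.v *)
Require Import Defs.
From Stdlib Require Import Reals List Classical ClassicalEpsilon FunctionalExtensionality PropExtensionality Lra Lia Cantor.
Open Scope R_scope.

Lemma seteq {A : Type} (X Y : A -> Prop) : (forall x, X x <-> Y x) -> X = Y.
Proof. intro H; extensionality x; apply propositional_extensionality; auto. Qed.

Lemma sa_full {T} (S : set (set T)) : sigma_algebra S -> S (fun _ => True).
Proof. intros [h _]; exact h. Qed.
Lemma sa_compl {T} (S : set (set T)) A : sigma_algebra S -> S A -> S (fun x => ~ A x).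
Proof. intros [_ [h _]]; apply h. Qed.
Lemma sa_union {T} (S : set (set T)) (A : nat -> set T) : sigma_algebra S ->
  (forall n, S (A n)) -> S (fun x => exists n, A n x).
Proof. intros [_ [_ h]]; apply h. Qed.
Lemma sa_ext {T} (S : set (set T)) A B : S A -> (forall x, A x <-> B x) -> S B.
Proof. intros h e; replace B with A by (apply seteq; auto); auto. Qed.
Lemma sa_empty {T} (S : set (set T)) : sigma_algebra S -> S (fun _ => False).
Proof. intro h. apply (sa_ext _ _ _ (sa_compl _ _ h (sa_full _ h))). tauto. Qed.
Lemma sa_union2 {T} (S : set (set T)) A B : sigma_algebra S -> S A -> S B ->
  S (fun x => A x \/ B x).
Proof.
  intros h hA hB.
  apply (sa_ext _ _ _ (sa_union S (fun n => match n with 0%nat => A | _ => B end) h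
     ltac:(intros [|n]; auto))).
  intro x; split.
  - intros [[|n] H]; auto.
  - intros [H|H]; [exists 0%nat | exists 1%nat]; auto.
Qed.
Lemma sa_inter {T} (S : set (set T)) A B : sigma_algebra S -> S A -> S B ->
  S (fun x => A x /\ B x).
Proof.
  intros h hA hB.
  apply (sa_ext _ _ _ (sa_compl _ _ h (sa_union2 _ _ _ h (sa_compl _ _ h hA) (sa_compl _ _ h hB)))).
  intro x; split; [intro H; split; apply NNPP; tauto | tauto].
Qed.

Lemma gen_sa {T} (G : set (set T)) : sigma_algebra (gen_sigma G).
Proof.
  split; [|split].
  - intros H hH _. exact (sa_full H hH).
  - intros A hA H hH hg. exact (sa_compl H _ hH (hA H hH hg)).
  - intros A hA H hH hg. exact (sa_union H _ hH (fun n => hA n H hH hg)).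
Qed.
Lemma gen_incl {T} (G : set (set T)) X : G X -> gen_sigma G X.
Proof. intros h H _ hg; auto. Qed.

Lemma CS_restr {T} (Sg : set (set T)) (G : set T) : sigma_algebra Sg -> Sg G ->
  forall X, CS Sg X -> CS Sg (fun M => X (fun x => M x /\ G x)).
Proof.
  intros hS hG X hX.
  apply (hX (fun X => CS Sg (fun M => X (fun x => M x /\ G x)))).
  - split; [|split].
    + apply (sa_full _ (gen_sa _)).
    + intros A hA. exact (sa_compl _ _ (gen_sa _) hA).
    + intros A hA. exact (sa_union _ _ (gen_sa _) hA).
  - intros Y [A [B [hA hY]]]. apply gen_incl. exists (setI A G), B. split.
    + exact (sa_inter Sg A G hS hA hG).
    + intro M. rewrite hY. unfold N_.
      replace (setI A (fun x => M x /\ G x)) with (setI (setI A G) M)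
        by (apply seteq; unfold setI; tauto). tauto.
Qed.

Lemma infsum_const c l : infinite_sum (fun _ => c) l -> c = 0.
Proof.
  intro H. apply NNPP; intro Hc.
  assert (Hp : Rabs c / 2 > 0) by (pose proof (Rabs_pos_lt c Hc); lra).
  destruct (H _ Hp) as [N HN].
  pose proof (HN N ltac:(lia)) as H1. pose proof (HN (S N) ltac:(lia)) as H2.
  simpl in H2. unfold Rdist in *.
  apply Rabs_def2 in H1. apply Rabs_def2 in H2.
  unfold Rabs in *. destruct (Rcase_abs c); lra.
Qed.

Lemma sum_zero (f : nat -> R) : (forall k, f k = 0) -> forall n, sum_f_R0 f n = 0.
Proof. intros h n; induction n; simpl; rewrite ?IHn, h; lra. Qed.

Lemma infsum_zero (f : nat -> R) : (forall k, f k = 0) -> infinite_sum f 0.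
Proof.
  intros h eps He. exists 0%nat. intros n _. rewrite sum_zero; auto.
  unfold Rdist. rewrite Rminus_0_r, Rabs_R0. lra.
Qed.

Lemma P_empty {Omega} (F : set (set Omega)) P : probability F P -> P (fun _ => False) = 0.
Proof.
  intros [hF [_ [_ hadd]]].
  pose proof (hadd (fun _ _ => False) (fun _ => sa_empty _ hF) ltac:(tauto)) as H.
  replace (fun w : Omega => exists _ : nat, False) with (fun _ : Omega => False) in H
    by (apply seteq; firstorder).
  exact (infsum_const _ _ H).
Qed.

Lemma P_add2 {Omega} (F : set (set Omega)) P A B : probability F P -> F A -> F B ->
  (forall w, A w -> B w -> False) -> P (fun w => A w \/ B w) = P A + P B.
Proof.
  intros hP hA hB hd. pose proof (P_empty _ _ hP) as h0.
  destruct hP as [hF [_ [_ hadd]]].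
  set (g := fun n : nat => match n with 0%nat => A | 1%nat => B | _ => fun _ => False end).
  assert (hg : forall n, F (g n)) by (intros [|[|n]]; simpl; auto; apply sa_empty; auto).
  assert (hgd : forall m n x, m <> n -> g m x -> g n x -> False).
  { intros [|[|m]] [|[|n]] x hmn; simpl; try tauto; try lia; eauto. }
  pose proof (hadd g hg hgd) as H.
  replace (fun w => exists n, g n w) with (fun w => A w \/ B w) in H.
  2:{ apply seteq; intro x; split.
      - intros [h|h]; [exists 0%nat | exists 1%nat]; auto.
      - intros [[|[|n]] h]; simpl in h; tauto. }
  apply (uniqueness_sum _ _ _ H).
  intros eps He. exists 1%nat. intros n Hn.
  assert (Hs : sum_f_R0 (fun n => P (g n)) n = P A + P B).
  { induction n as [|n IH]; [lia|].
    destruct n as [|n]; [simpl; reflexivity|].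
    simpl sum_f_R0 in *. rewrite IH by lia. simpl. rewrite h0. lra. }
  rewrite Hs. unfold Rdist. replace (P A + P B - (P A + P B)) with 0 by ring.
  rewrite Rabs_R0; lra.
Qed.

Lemma P_mono {Omega} (F : set (set Omega)) P A B : probability F P -> F A -> F B ->
  (forall w, A w -> B w) -> P A <= P B.
Proof.
  intros hP hA hB hAB.
  assert (hF := proj1 hP). assert (hpos := proj1 (proj2 hP)).
  assert (hD : F (fun w => B w /\ ~ A w)) by (apply sa_inter; auto; apply sa_compl; auto).
  pose proof (P_add2 _ _ _ _ hP hA hD (fun w h1 h2 => proj2 h2 h1)) as H. cbv beta in H.
  replace (fun w => A w \/ (B w /\ ~ A w)) with B in H.
  2:{ apply seteq; intro w; split; [intro h; destruct (classic (A w)); tauto | intros [h|[h _]]; auto]. }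
  pose proof (hpos _ hD). lra.
Qed.

Lemma P_null_union {Omega} (F : set (set Omega)) P (A : nat -> set Omega) :
  probability F P -> (forall n, F (A n)) -> (forall n, P (A n) = 0) ->
  P (fun w => exists n, A n w) = 0.
Proof.
  intros hP hA h0.
  assert (hF := proj1 hP). assert (hpos := proj1 (proj2 hP)).
  set (D := fun n w => A n w /\ ~ (exists m, (m < n)%nat /\ A m w)).
  assert (hD : forall n, F (D n)).
  { intro n. apply sa_inter; auto. apply sa_compl; auto. apply sa_union; auto.
    intro m. destruct (Nat.lt_ge_cases m n) as [h|h].
    - apply (sa_ext _ _ _ (hA m)). intuition.
    - apply (sa_ext _ _ _ (sa_empty _ hF)). intuition lia. }
  assert (hD0 : forall n, P (D n) = 0).
  { intro n. pose proof (P_mono _ _ _ _ hP (hD n) (hA n) ltac:(unfold D; tauto)).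
    pose proof (hpos _ (hD n)). rewrite h0 in *. lra. }
  assert (hdisj : forall m n x, m <> n -> D m x -> D n x -> False).
  { intros m n x hmn [h1 h2] [h3 h4].
    destruct (Nat.lt_ge_cases m n); [apply h4; eauto | apply h2; exists n; split; auto; lia]. }
  pose proof (proj2 (proj2 (proj2 hP)) D hD hdisj) as H.
  replace (fun w => exists n, D n w) with (fun w => exists n, A n w) in H.
  - exact (uniqueness_sum _ _ _ H (infsum_zero _ hD0)).
  - apply seteq; intro w; split.
    + intros [n hn].
      assert (Hk : forall k n, (n <= k)%nat -> A n w -> exists m, D m w).
      { induction k as [|k IH]; intros n' hle hn'.
        - exists n'. split; auto. intros [m [hm _]]. lia.
        - destruct (classic (exists m, (m < n')%nat /\ A m w)) as [[m [hm1 hm2]]|hno].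
          + apply (IH m); auto; lia.
          + exists n'. split; auto. }
      exact (Hk n n (le_n n) hn).
    + intros [n [hn _]]; eauto.
Qed.
Lemma card_ext {T} (X Y : set T) o : (forall x, X x <-> Y x) -> card_is X o -> card_is Y o.
Proof. intros H; replace Y with X by (apply seteq; auto); auto. Qed.

Lemma fin_of_cover {T} (l : list T) : forall X : set T,
  (forall x, X x -> In x l) -> exists n, card_is X (Some n).
Proof.
  induction l as [|a l IH]; intros X HX.
  - exists 0%nat, nil. split; [reflexivity|]. split; [constructor|].
    intro x; split; [intro h; apply HX in h; destruct h | intros []].
  - destruct (IH (fun x => X x /\ x <> a)) as [n [l0 [Hlen [Hnd Hiff]]]].
    { intros x [Hx Hne]. destruct (HX x Hx) as [<-|]; [congruence | auto]. }
    destruct (classic (X a)) as [Ha|Ha].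
    + exists (S n), (a :: l0). split; [simpl; lia|]. split.
      * constructor; auto. intro Hin. apply Hiff in Hin. destruct Hin; congruence.
      * intro x. split.
        -- intro Hx. destruct (classic (x = a)) as [->|Hne]; [left; auto | right; apply Hiff; auto].
        -- intros [<-|Hin]; [auto | apply Hiff in Hin; tauto].
    + exists n, l0. split; auto. split; auto. intro x. rewrite <- Hiff.
      split; [intro Hx; split; auto; intro; subst; auto | tauto].
Qed.

Lemma card_total {T} (X : set T) : exists o, card_is X o.
Proof.
  destruct (classic (card_is X None)) as [h|h]; [exists None; auto|].
  simpl in h. apply not_all_ex_not in h. destruct h as [l hl].
  destruct (fin_of_cover l X) as [n hn].
  - intros x hx. apply NNPP; intro hn. apply hl; eauto.
  - exists (Some n); auto.
Qed.

Lemma card_some_none {T} (X : set T) n : card_is X (Some n) -> card_is X None -> False.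
Proof.
  intros [l [_ [_ hl]]] h. destruct (h l) as [x [hx hn]]. apply hn, hl, hx.
Qed.

Lemma card_len_le {T} (X : set T) n l : card_is X (Some n) -> NoDup l ->
  (forall x, In x l -> X x) -> (length l <= n)%nat.
Proof.
  intros [L [HL [_ Hiff]]] hl hx. subst n. apply NoDup_incl_length; auto.
  intros x h; apply Hiff; auto.
Qed.

Lemma sublist_len {T} (L : list T) : NoDup L -> forall j, (j <= length L)%nat ->
  exists l, NoDup l /\ length l = j /\ incl l L.
Proof.
  induction L as [|a L IH]; intros hnd j hj.
  - exists nil. simpl in hj. split; [constructor|]. split; [simpl; lia|]. intros x [].
  - inversion hnd; subst. destruct j as [|j].
    + exists nil. split; [constructor|]. split; [reflexivity|]. intros x [].
    + simpl in hj. destruct (IH H2 j ltac:(lia)) as [l [h1 [h2 h3]]].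
      exists (a :: l). split; [constructor; auto|]. split; [simpl; lia|].
      intros x [<-|hx]; [left; auto | right; auto].
Qed.

Definition atleast {T} (X : set T) (j : nat) : Prop :=
  exists l, NoDup l /\ length l = j /\ forall x, In x l -> X x.
Definition geo (j : nat) (o : option nat) : Prop :=
  match o with Some n => (j <= n)%nat | None => True end.

Lemma atleast_card {T} (X : set T) j : atleast X j <-> exists o, card_is X o /\ geo j o.
Proof.
  split.
  - intros [l [h1 [h2 h3]]]. destruct (card_total X) as [[n|] hn].
    + exists (Some n). split; auto. simpl. subst j. eapply card_len_le; eauto.
    + exists None; split; simpl; auto.
  - intros [[n|] [hn hg]]; simpl in hg.
    + destruct hn as [L [HL [Hnd Hiff]]].
      destruct (sublist_len L Hnd j ltac:(lia)) as [l [h1 [h2 h3]]].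
      exists l. split; auto. split; auto. intros x hx. apply Hiff; auto.
    + clear hg. induction j as [|j IH].
      * exists nil. split; [constructor|]. split; [reflexivity|]. intros x [].
      * destruct IH as [l [h1 [h2 h3]]]. destruct (hn l) as [x [hx hxn]].
        exists (x :: l). split; [constructor; auto|]. split; [simpl; lia|].
        intros y [<-|hy]; auto.
Qed.

Lemma nonempty_card {T} (X : set T) : (exists x, X x) <-> exists o, card_is X o /\ o <> Some 0%nat.
Proof.
  split.
  - intros [x hx]. destruct (card_total X) as [o ho]. exists o. split; auto.
    intros ->. destruct ho as [l [hl [_ hi]]]. destruct l; [|discriminate].
    apply hi in hx. destruct hx.
  - intros [o [ho hne]]. apply NNPP; intro hn. apply hne.
    destruct o as [n|].
    + destruct ho as [l [hl [_ hi]]]. destruct l as [|a l]; [subst; auto|].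
      exfalso; apply hn. exists a. apply hi; left; auto.
    + destruct (ho nil) as [x [hx _]]. exfalso; eauto.
Qed.

Lemma meas_card {Omega T} (F : set (set Omega)) (Sg : set (set T)) (pi : Omega -> set T)
  G (B : option nat -> Prop) : cr_set F Sg pi -> Sg G ->
  F (fun w => exists o, card_is (setI G (pi w)) o /\ B o).
Proof.
  intros [_ H] hG. apply (H (fun M => exists o, N_ G M o /\ B o)). apply gen_incl.
  exists G, B. split; auto. intro; tauto.
Qed.

Lemma meas_atleast {Omega T} (F : set (set Omega)) (Sg : set (set T)) (pi : Omega -> set T)
  G j : cr_set F Sg pi -> Sg G -> F (fun w => atleast (setI G (pi w)) j).
Proof.
  intros h hG. apply (sa_ext _ _ _ (meas_card F Sg pi G (geo j) h hG)).
  intro w. rewrite atleast_card. tauto.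
Qed.

Lemma meas_nonempty {Omega T} (F : set (set Omega)) (Sg : set (set T)) (pi : Omega -> set T)
  G : cr_set F Sg pi -> Sg G -> F (fun w => exists x, G x /\ pi w x).
Proof.
  intros h hG. apply (sa_ext _ _ _ (meas_card F Sg pi G (fun o => o <> Some 0%nat) h hG)).
  intro w. rewrite <- (nonempty_card (setI G (pi w))). unfold setI. tauto.
Qed.

Lemma meas_cardeq {Omega T} (F : set (set Omega)) (Sg : set (set T)) (pi : Omega -> set T)
  G o : cr_set F Sg pi -> Sg G -> F (fun w => card_is (setI G (pi w)) o).
Proof.
  intros h hG. apply (sa_ext _ _ _ (meas_card F Sg pi G (fun o' => o' = o) h hG)).
  intro w. split; [intros [o' [h1 ->]]; auto | intro h1; exists o; auto].
Qed.

Definition asfin {Omega T} (P : set Omega -> R) (pi : Omega -> set T) (B : set T) :=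
  P (fun w => card_is (setI B (pi w)) None) = 0.
Definition Gs {Omega T} (P : set Omega -> R) (Sg : set (set T)) (pi : Omega -> set T) (G : set T) :=
  exists B : nat -> set T, (forall i, Sg (B i) /\ asfin P pi (B i)) /\
    forall x, G x <-> exists i, B i x.
Definition Ev {Omega T} (pik : nat -> Omega -> set T) k j (G : set T) : set Omega :=
  fun w => atleast (setI G (pik k w)) j.

Lemma Gs_Sg {Omega T} P Sg (pi : Omega -> set T) G : sigma_algebra Sg -> Gs P Sg pi G -> Sg G.
Proof.
  intros hS [B [hB hG]]. apply (sa_ext _ _ _ (sa_union Sg B hS (fun i => proj1 (hB i)))).
  intro x; rewrite hG; tauto.
Qed.

Lemma Gs_empty {Omega T} F P Sg (pi : Omega -> set T) : probability F P -> sigma_algebra Sg ->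
  Gs P Sg pi (fun _ => False).
Proof.
  intros hP hS. exists (fun _ _ => False). split; [|firstorder]. intro i. split; [apply sa_empty; auto|].
  unfold asfin. rewrite <- (P_empty F P hP). f_equal. apply seteq; intro w; split; [|tauto].
  intro h. destruct (h nil) as [x [[hx _] _]]; auto.
Qed.

Lemma Gs_union {Omega T} P Sg (pi : Omega -> set T) (G : nat -> set T) :
  (forall n, Gs P Sg pi (G n)) -> Gs P Sg pi (fun x => exists n, G n x).
Proof.
  intros hG.
  set (Bf := fun n => proj1_sig (constructive_indefinite_description _ (hG n))).
  assert (hBf : forall n, (forall i, Sg (Bf n i) /\ asfin P pi (Bf n i)) /\
                   forall x, G n x <-> exists i, Bf n i x)
    by (intro n; exact (proj2_sig (constructive_indefinite_description _ (hG n)))).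
  exists (fun i => let (n, m) := Cantor.of_nat i in Bf n m). split.
  - intro i. destruct (Cantor.of_nat i) as [n m]. apply hBf.
  - intro x. split.
    + intros [n hn]. apply (proj2 (hBf n)) in hn. destruct hn as [m hm].
      exists (Cantor.to_nat (n, m)). rewrite Cantor.cancel_of_to. auto.
    + intros [i hi]. destruct (Cantor.of_nat i) as [n m]. exists n. apply (proj2 (hBf n)). eauto.
Qed.

Lemma Gs_add {Omega T} P Sg (pi : Omega -> set T) G A :
  Gs P Sg pi G -> Sg A -> asfin P pi A -> Gs P Sg pi (fun x => G x \/ A x).
Proof.
  intros [B [hB hG]] hA hfA.
  exists (fun i => match i with 0%nat => A | S i => B i end). split.
  - intros [|i]; auto.
  - intro x; rewrite hG; split.
    + intros [[i hi]|hx]; [exists (S i) | exists 0%nat]; auto.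
    + intros [[|i] hi]; [right | left; exists i]; auto.
Qed.

Lemma one_side {Omega T} (F : set (set Omega)) P (Sg : set (set T)) pi F1 F2 :
  probability F P -> sigma_algebra Sg -> cr_set F Sg pi -> Sg F1 -> Sg F2 ->
  prop_i F P Sg pi F1 -> prop_ii P Sg pi F2 ->
  P (fun w => exists x, (F1 x /\ ~ F2 x) /\ pi w x) = 0.
Proof.
  intros hP hS hpi h1 h2 [pi' [[hpi' [N [hN [hPN hver]]]] [An [hAn [hcov hfin]]]]] hii.
  assert (hF := proj1 hP). assert (hpos := proj1 (proj2 hP)).
  set (C := fun n x => (F1 x /\ An n x) /\ ~ F2 x).
  assert (hC : forall n, Sg (C n)).
  { intro n; unfold C; apply sa_inter; auto; [apply sa_inter; auto | apply sa_compl; auto]. }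
  replace (fun w => exists x, (F1 x /\ ~ F2 x) /\ pi w x)
    with (fun w => exists n, exists x, C n x /\ pi w x).
  2:{ apply seteq; intro w; split.
      - intros [n [x [hx hp]]]. exists x. unfold C in hx. tauto.
      - intros [x [hx hp]]. destruct (hcov x) as [n hn]. exists n, x. unfold C; tauto. }
  apply (P_null_union F); auto.
  - intro n. apply (meas_nonempty F Sg pi (C n)); auto.
  - intro n.
    assert (hAn' : Sg (fun x => F1 x /\ An n x)) by (apply sa_inter; auto).
    destruct (hii (fun x => F1 x /\ An n x) hAn') as [h|h].
    + rewrite <- h. f_equal. apply seteq; intro w. unfold cr_inter, setI, setC, C. firstorder.
    + exfalso.
      assert (hset : forall w, cr_inter (cr_inter pi (setC F2)) (fun x => F1 x /\ An n x) w
                               = setI (C n) (pi w)).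
      { intro w. apply seteq; intro x; unfold cr_inter, setI, setC, C; tauto. }
      assert (hInf : F (fun w => card_is (cr_inter (cr_inter pi (setC F2)) (fun x => F1 x /\ An n x) w) None)).
      { apply (sa_ext _ _ _ (meas_cardeq F Sg pi (C n) None hpi (hC n))).
        intro w. rewrite hset. tauto. }
      assert (hle : P (fun w => card_is (cr_inter (cr_inter pi (setC F2)) (fun x => F1 x /\ An n x) w) None) <= P N).
      { apply (P_mono F); auto. intros w hw. apply NNPP; intro hnw.
        destruct (hfin w n) as [m [L [_ [_ hL]]]].
        destruct (fin_of_cover L (cr_inter (cr_inter pi (setC F2)) (fun x => F1 x /\ An n x) w)) as [k hk].
        - intros x hx. apply (proj1 (hL x)). unfold setI. split; [|unfold cr_inter, setI in hx; tauto].
          apply (hver w hnw). unfold cr_inter, setI, setC in *. tauto.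
        - exact (card_some_none _ _ hk hw). }
      lra.
Qed.

Theorem theorem1p10 (Omega T : Type) (F : set (set Omega)) (P : set Omega -> R)
    (Sg : set (set T)) (pi : Omega -> set T) :
  probability F P ->
  sigma_algebra Sg ->
  prod_sigma Sg (diagonal T) ->
  cr_set F Sg pi ->
  constructive F Sg pi ->
  (exists F0, Sg F0 /\ prop_i F P Sg pi F0 /\ prop_ii P Sg pi F0) /\
  (forall F1 F2, Sg F1 -> Sg F2 ->
     prop_i F P Sg pi F1 -> prop_ii P Sg pi F1 ->
     prop_i F P Sg pi F2 -> prop_ii P Sg pi F2 ->
     P (fun w => exists x, cr_inter pi (symdiff F1 F2) w x) = 0).
Proof.
  intros hP hS _ hpi [pik [hpik hun]].
  assert (hF := proj1 hP). assert (hpos := proj1 (proj2 hP)).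
  split.
  2:{ intros F1 F2 h1 h2 i1 ii1 i2 ii2.
      pose proof (one_side F P Sg pi F1 F2 hP hS hpi h1 h2 i1 ii2) as e1.
      pose proof (one_side F P Sg pi F2 F1 hP hS hpi h2 h1 i2 ii1) as e2.
      set (g := fun n : nat => match n with
                | 0%nat => fun w => exists x, (F1 x /\ ~ F2 x) /\ pi w x
                | 1%nat => fun w => exists x, (F2 x /\ ~ F1 x) /\ pi w x
                | _ => fun _ => False end).
      replace (fun w => exists x, cr_inter pi (symdiff F1 F2) w x) with (fun w => exists n, g n w).
      - apply (P_null_union F); auto.
        + intros [|[|n]]; simpl.
          * apply (meas_nonempty F Sg pi (fun x => F1 x /\ ~ F2 x)); auto.
            apply sa_inter; auto; apply sa_compl; auto.
          * apply (meas_nonempty F Sg pi (fun x => F2 x /\ ~ F1 x)); auto.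
            apply sa_inter; auto; apply sa_compl; auto.
          * apply sa_empty; auto.
        + intros [|[|n]]; simpl; auto. apply (P_empty F); auto.
      - apply seteq; intro w; split.
        + intros [[|[|n]] hn]; simpl in hn; try tauto; destruct hn as [x hx]; exists x;
            unfold cr_inter, setI, symdiff; tauto.
        + intros [x hx]. unfold cr_inter, setI, symdiff in hx.
          destruct hx as [hp [hx|hx]]; [exists 0%nat | exists 1%nat]; simpl; exists x; tauto. }
  assert (hpikcr : forall k, cr_set F Sg (pik k)) by (intro k; exact (proj1 (hpik k))).
  assert (Ev_meas : forall k j G, Sg G -> F (Ev pik k j G))
    by (intros; apply (meas_atleast F Sg); auto).
  assert (Ev_mono : forall k j G G' w, (forall x, G x -> G' x) -> Ev pik k j G w -> Ev pik k j G' w).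
  { intros k j G G' w h [l [h1 [h2 h3]]]. exists l. split; auto. split; auto.
    intros x hx. destruct (h3 x hx); split; auto. }
  assert (P_le1 : forall A, F A -> P A <= 1).
  { intros A hA. rewrite <- (proj1 (proj2 (proj2 hP))). apply (P_mono F); auto. apply sa_full; auto. }
  assert (hsup : forall k j, {s : R | is_lub (fun r => exists G, Gs P Sg pi G /\ r = P (Ev pik k j G)) s}).
  { intros k j. apply completeness.
    - exists 1. intros r [G [hG ->]]. apply P_le1, Ev_meas, (Gs_Sg P Sg pi); auto.
    - exists (P (Ev pik k j (fun _ => False))). exists (fun _ => False); split; auto.
      apply (Gs_empty F); auto. }
  set (s := fun k j => proj1_sig (hsup k j)).
  assert (hs : forall k j, is_lub (fun r => exists G, Gs P Sg pi G /\ r = P (Ev pik k j G)) (s k j))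
    by (intros; exact (proj2_sig (hsup k j))).
  assert (happrox : forall k j m, exists G, Gs P Sg pi G /\ s k j - / INR (S m) < P (Ev pik k j G)).
  { intros k j m. apply NNPP; intro hn.
    assert (hub : is_upper_bound (fun r => exists G, Gs P Sg pi G /\ r = P (Ev pik k j G))
                    (s k j - / INR (S m))).
    { intros r [G [hG ->]]. apply Rnot_lt_le. intro hlt. apply hn. eauto. }
    pose proof (proj2 (hs k j) _ hub).
    assert (0 < / INR (S m)) by (apply Rinv_0_lt_compat, lt_0_INR; lia). lra. }
  set (Ga := fun k j m => proj1_sig (constructive_indefinite_description _ (happrox k j m))).
  assert (hGa : forall k j m, Gs P Sg pi (Ga k j m) /\ s k j - / INR (S m) < P (Ev pik k j (Ga k j m)))
    by (intros; exact (proj2_sig (constructive_indefinite_description _ (happrox k j m)))).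
  set (Gstar := fun x => exists k, exists j, exists m, Ga k j m x).
  assert (hGs : Gs P Sg pi Gstar).
  { apply (Gs_union P Sg pi (fun k x => exists j m, Ga k j m x)); intro k.
    apply (Gs_union P Sg pi (fun j x => exists m, Ga k j m x)); intro j.
    apply (Gs_union P Sg pi (fun m => Ga k j m)); intro m. apply hGa. }
  assert (hGsSg : Sg Gstar) by (apply (Gs_Sg P Sg pi); auto).
  assert (hkey : forall k j, P (Ev pik k j Gstar) = s k j).
  { intros k j. apply Rle_antisym.
    - apply (proj1 (hs k j)). exists Gstar; auto.
    - apply Rnot_lt_le; intro hlt.
      destruct (archimed_cor1 (s k j - P (Ev pik k j Gstar)) ltac:(lra)) as [N [hN1 hN2]].
      destruct N as [|m]; [lia|].
      destruct (hGa k j m) as [hG1 hG2].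
      assert (P (Ev pik k j (Ga k j m)) <= P (Ev pik k j Gstar)).
      { apply (P_mono F); auto.
        - apply Ev_meas, (Gs_Sg P Sg pi); auto.
        - intros w hw. apply (Ev_mono k j (Ga k j m)); auto. intros x hx. exists k, j, m; auto. }
      lra. }
  exists Gstar. split; [auto|]. split.
  -
    destruct hGs as [B [hB hG]].
    set (N := fun w => exists i, card_is (setI (B i) (pi w)) None).
    assert (hN : F N).
    { apply sa_union; auto; intro i; apply (meas_cardeq F Sg); auto; apply hB. }
    assert (hPN : P N = 0).
    { apply (P_null_union F); auto; [intro i; apply (meas_cardeq F Sg); auto; apply hB | intro i; apply hB]. }
    exists (fun w x => ~ N w /\ (pi w x /\ Gstar x)). split.
    + split.
      * split.
        -- intro w. destruct (proj1 hpi w) as [f hf]. exists f. intros x [_ [hx _]]. auto.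
        -- intros X hX. cbv beta.
           apply (sa_ext _ (fun w => (N w /\ X (fun _ => False)) \/ (~ N w /\ X (fun x => pi w x /\ Gstar x)))).
           ++ apply sa_union2; auto.
              ** destruct (classic (X (fun _ => False))) as [hx|hx].
                 --- apply (sa_ext _ _ _ hN). tauto.
                 --- apply (sa_ext _ _ _ (sa_empty _ hF)). tauto.
              ** apply sa_inter; auto. apply sa_compl; auto.
                 apply (proj2 hpi (fun M => X (fun x => M x /\ Gstar x))). apply CS_restr; auto.
           ++ intro w. destruct (classic (N w)) as [hw|hw].
              ** replace (fun x => ~ N w /\ (pi w x /\ Gstar x)) with (fun _ : T => False)
                   by (apply seteq; tauto). tauto.
              ** replace (fun x => ~ N w /\ (pi w x /\ Gstar x)) with (fun x => pi w x /\ Gstar x)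
                   by (apply seteq; tauto). tauto.
      * exists N. split; auto. split; auto. intros w hw x. unfold cr_inter, setI. tauto.
    + exists (fun n => match n with 0%nat => setC Gstar | S i => B i end). split; [|split].
      * intros [|i]; [exact (sa_compl Sg Gstar hS hGsSg) | apply hB].
      * intro x. destruct (classic (Gstar x)) as [hx|hx].
        -- apply hG in hx; destruct hx as [i hi]; exists (S i); auto.
        -- exists 0%nat; auto.
      * intros w [|i].
        -- apply (fin_of_cover nil). intros x [[_ [_ h1]] h2]. contradiction.
        -- destruct (classic (N w)) as [hw|hw].
           ++ apply (fin_of_cover nil). intros x [[h _] _]. contradiction.
           ++ destruct (card_total (setI (B i) (pi w))) as [[m|] hm].
              ** destruct hm as [L [_ [_ hL]]]. apply (fin_of_cover L).
                 intros x [[_ [h1 _]] h2]. apply hL. split; auto.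
              ** exfalso; apply hw; exists i; auto.
  -
    intros A hA.
    destruct (classic (P (fun w => exists x, cr_inter (cr_inter pi (setC Gstar)) A w x) = 0))
      as [h0|h0]; [left; auto | right].
    apply Rnot_le_lt; intro hle.
    set (A' := fun x => A x /\ ~ Gstar x).
    assert (hA' : Sg A') by (unfold A'; apply sa_inter; auto; apply sa_compl; auto).
    assert (hset : forall w, cr_inter (cr_inter pi (setC Gstar)) A w = setI A' (pi w)).
    { intro w. apply seteq; intro x; unfold cr_inter, setI, setC, A'; tauto. }
    assert (hfinA : asfin P pi A').
    { unfold asfin. apply Rle_antisym.
      - replace (fun w => card_is (setI A' (pi w)) None)
          with (fun w => card_is (cr_inter (cr_inter pi (setC Gstar)) A w) None); [exact hle|].
        apply seteq; intro w. rewrite hset. tauto.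
      - apply hpos. apply (meas_cardeq F Sg); auto. }
    set (G' := fun x => Gstar x \/ A' x).
    assert (hG' : Gs P Sg pi G') by (apply Gs_add; auto).
    set (Fk := fun k w => exists x, A' x /\ pik k w x).
    assert (hFk : forall k, F (Fk k)) by (intro k; apply (meas_nonempty F Sg); auto).
    assert (hE1 : (fun w => exists x, cr_inter (cr_inter pi (setC Gstar)) A w x)
                  = (fun w => exists k, Fk k w)).
    { apply seteq; intro w. unfold Fk, cr_inter, setI, setC, A'. split.
      - intros [x [[hp hg] ha]]. apply hun in hp. destruct hp as [k hk]. eauto.
      - intros [k [x [[ha hg] hp]]]. exists x. split; auto. split; auto. apply hun. eauto. }
    rewrite hE1 in h0.
    destruct (not_all_ex_not _ _ (fun H => h0 (P_null_union F P Fk hP hFk H))) as [k hk].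
    set (D := fun m w => Fk k w /\ card_is (setI Gstar (pik k w)) (Some m)).
    assert (hD : forall m, F (D m)).
    { intro m; unfold D; apply sa_inter; auto; apply (meas_cardeq F Sg); auto. }
    assert (hFkD : Fk k = fun w => exists m, D m w).
    { apply seteq; intro w. split.
      - intro hw. destruct (proj2 (hpik k) w) as [n [L [_ [_ hL]]]].
        destruct (fin_of_cover L (setI Gstar (pik k w))) as [m hm].
        + intros x [_ hx]. apply hL; auto.
        + exists m. split; auto.
      - intros [m [hw _]]; auto. }
    rewrite hFkD in hk.
    destruct (not_all_ex_not _ _ (fun H => hk (P_null_union F P D hP hD H))) as [m hm].
    assert (hDpos : 0 < P (D m)) by (pose proof (hpos _ (hD m)); lra).
    assert (hdisj : forall w, D m w -> Ev pik k (S m) Gstar w -> False).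
    { intros w [_ hc] [l [h1 [h2 h3]]]. pose proof (card_len_le _ _ _ hc h1 h3). lia. }
    assert (hincl : forall w, D m w \/ Ev pik k (S m) Gstar w -> Ev pik k (S m) G' w).
    { intros w [[[x [hx1 hx2]] [L [hL1 [hL2 hL3]]]] | hw].
      - exists (x :: L). split; [constructor; auto|].
        + intro hin. apply hL3 in hin. destruct hin as [hg _]. destruct hx1; contradiction.
        + split; [simpl; lia|]. intros y [<-|hy].
          * split; [right|]; auto.
          * apply hL3 in hy. destruct hy; split; [left|]; auto.
      - apply (Ev_mono k (S m) Gstar); auto. intros x hx; left; auto. }
    pose proof (P_add2 F P (D m) (Ev pik k (S m) Gstar) hP (hD m) (Ev_meas _ _ _ hGsSg) hdisj) as hadd.
    assert (P (fun w => D m w \/ Ev pik k (S m) Gstar w) <= P (Ev pik k (S m) G')).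
    { apply (P_mono F); auto.
      - apply sa_union2; auto.
      - apply Ev_meas; apply (Gs_Sg P Sg pi); auto. }
    assert (P (Ev pik k (S m) G') <= s k (S m)) by (apply (proj1 (hs k (S m))); exists G'; auto).
    pose proof (hkey k (S m)). lra.
Qed.
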